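(* Let $Q$ be a QNP and $P=T_D(Q)$. A policy $\pi$ for $P$ is $P$-terminating if and only if the procedure Sieve reduces the policy graph $\mathcal{G}(P,\pi)$ to an acyclic graph.
   Context: A QNP is a tuple $Q=\langle F,V,I,O,G\rangle$ with finite sets $F$ of propositional variables and $V$ of numerical (non-negative real) variables; $I$, $G$ are sets of literals $p,\neg p$ ($p\in F$), $X=0$, $X>0$ ($X\in V$); each action $a\in O$ has a precondition (set of such literals), propositional effects (set of $F$-literals), and numerical effects $N(a)$ consisting of atoms $Inc(X)$, $Dec(X)$ (at most one per variable), with $X>0$ in the precondition whenever $Dec(X)\in N(a)$. The direct translation $T_D(Q)$ is the FOND problem over $F\cup\{p_{X=0}:X\in V\}$ obtained by reading $X=0$ as $p_{X=0}$ and $X>0$ as $\neg p_{X=0}$ in $I$, $G$, and preconditions, keeping propositional effects, replacing $Inc(X)$ by the deterministic effect $\neg p_{X=0}$ and $Dec(X)$ by the nondeterministic effect $\neg p_{X=0}\mid p_{X=0}$; it has a unique initial state (atoms not in $I$ are false). For a state $\bar s$ and action $a$ applicable in it, $F(a,\bar s)$ is the set of possible successors. A policy $\pi$ for $P$ is a partial map from states to actions; a $\pi$-trajectory is a sequence $\bar s_0,\bar s_1,\dots$ from the initial state with $\pi(\bar s_i)$ applicable and $\bar s_{i+1}\in F(\pi(\bar s_i),\bar s_i)$. An action of $P$ is a $Dec(X)$ (resp. $Inc(X)$) action if it comes from an action of $Q$ with $Dec(X)$ (resp. $Inc(X)$) in its numerical effects. An infinite $\pi$-trajectory is terminating if there is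 $X\in V$ such that $\pi(\bar s)$ is a $Dec(X)$ action for some state $\bar s$ occurring infinitely often in it and $\pi(\bar s')$ is not an $Inc(X)$ action for any state $\bar s'$ occurring infinitely often in it; $\pi$ is $P$-terminating iff every infinite $\pi$-trajectory is terminating. The policy graph $\mathcal{G}(P,\pi)$ has as nodes the states of $P$ reachable from the initial state by $\pi$-trajectories, and edges $(\bar s,\bar s')$ for $\bar s'\in F(\pi(\bar s),\bar s)$, labeled by $\pi(\bar s)$. The procedure Sieve on a graph $\mathcal G$ repeats: compute the strongly connected components (SCCs) of $\mathcal G$; choose an SCC $C$ and a variable $X\in V$ such that $\pi(\bar s)$ is a $Dec(X)$ action for some $\bar s\in C$ and $\pi(\bar s)$ is an $Inc(X)$ action for no $\bar s\in C$; remove all edges $(\bar s,\bar s')$ with $\bar s,\bar s'\in C$ and $\pi(\bar s)$ a $Dec(X)$ action; until $\mathcal G$ is acyclic or no such $C,X$ exist. *)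

(* Defs.v *)
From Stdlib Require Import Relations List.
From HB Require Import structures.
From mathcomp Require Import all_boot.
Set Implicit Arguments. Unset Strict Implicit. Unset Printing Implicit Defensive.

Section QNP.
Variables (F V A : finType).
(* F : propositional variables, V : numerical variables, A : actions (= O) *)

Inductive qlit := LPos of F | LNeg of F | LZero of V | LGt of V.

Inductive numeff := Inc | Dec.

(* A QNP <F,V,I,O,G> with O = A.  Numerical effects are a partial map
   V -> {Inc, Dec} ("at most one atom per variable"). *)
Record qnp := QNP {
  q_init : seq qlit;
  q_goal : seq qlit;
  q_pre  : A -> seq qlit;
  q_peff : A -> seq (F * bool);          (* (p,true) = p, (p,false) = ~p *)
  q_neff : A -> V -> option numeff
}.

Definition wf_qnp (Q : qnp) : Prop :=
  forall a X, q_neff Q a X = Some Dec -> List.In (LGt X) (q_pre Q a).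

(* A state of T_D(Q): truth values of the atoms p in F and of p_{X=0}. *)
Definition state := ({ffun F -> bool} * {ffun V -> bool})%type.

Definition holds (s : state) (l : qlit) : Prop :=
  match l with
  | LPos p => s.1 p = true
  | LNeg p => s.1 p = false
  | LZero X => s.2 X = true
  | LGt X => s.2 X = false
  end.

Variable Q : qnp.

(* unique initial state: atoms not in I are false *)
Definition init_state : state :=
  ([ffun p => has (fun l => if l is LPos q then q == p else false) (q_init Q)],
   [ffun X => has (fun l => if l is LZero Y then Y == X else false) (q_init Q)]).

Definition applicable (a : A) (s : state) : Prop :=
  forall l, List.In l (q_pre Q a) -> holds s l.

Definition succ (a : A) (s s' : state) : Prop :=
  (forall p, List.In (p, true) (q_peff Q a) -> s'.1 p = true) /\
  (forall p, List.In (p, false) (q_peff Q a) -> s'.1 p = false) /\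
  (forall p, ~ List.In (p, true) (q_peff Q a) -> ~ List.In (p, false) (q_peff Q a) ->
             s'.1 p = s.1 p) /\
  (forall X, match q_neff Q a X with
             | None => s'.2 X = s.2 X
             | Some Inc => s'.2 X = false
             | Some Dec => True
             end).

Definition policy := state -> option A.

Variable pi : policy.

Definition pstep (s s' : state) : Prop :=
  exists a, pi s = Some a /\ applicable a s /\ succ a s s'.

Definition inf_traj (tr : nat -> state) : Prop :=
  tr 0 = init_state /\ forall n, pstep (tr n) (tr n.+1).

Definition occurs_inf (tr : nat -> state) (s : state) : Prop :=
  forall n, exists m, n <= m /\ tr m = s.

Definition is_dec (X : V) (s : state) : Prop :=
  exists a, pi s = Some a /\ q_neff Q a X = Some Dec.
Definition is_inc (X : V) (s : state) : Prop :=
  exists a, pi s = Some a /\ q_neff Q a X = Some Inc.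

Definition terminating_traj (tr : nat -> state) : Prop :=
  exists X, (exists s, occurs_inf tr s /\ is_dec X s) /\
            (forall s, occurs_inf tr s -> ~ is_inc X s).

Definition P_terminating : Prop :=
  forall tr, inf_traj tr -> terminating_traj tr.

Definition reachable (s : state) : Prop :=
  clos_refl_trans state pstep init_state s.

(* a graph on the node set {reachable states} is given by its edge relation *)
Definition graph := state -> state -> Prop.

Definition policy_graph : graph := fun s s' => reachable s /\ pstep s s'.

Definition acyclic (E : graph) : Prop :=
  forall x y, E x y -> ~ clos_refl_trans state E y x.

Definition scc (E : graph) (C : state -> Prop) : Prop :=
  exists x, reachable x /\
    forall y, C y <-> (reachable y /\ clos_refl_trans state E x y /\
                       clos_refl_trans state E y x).

(* C contains a cycle (has an internal edge) *)
Definition nontrivial (E : graph) (C : state -> Prop) : Prop :=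
  exists x y, C x /\ C y /\ E x y.

Definition sieve_choice (E : graph) (C : state -> Prop) (X : V) : Prop :=
  scc E C /\ nontrivial E C /\
  (exists s, C s /\ is_dec X s) /\ (forall s, C s -> ~ is_inc X s).

Definition sieve_remove (E : graph) (C : state -> Prop) (X : V) : graph :=
  fun x y => E x y /\ ~ (C x /\ C y /\ is_dec X x).

Definition sieve_step (E E' : graph) : Prop :=
  ~ acyclic E /\ exists C X, sieve_choice E C X /\ E' = sieve_remove E C X.

Definition sieve_final (E : graph) : Prop :=
  acyclic E \/ ~ (exists C X, sieve_choice E C X).

Definition sieve_result (E : graph) : Prop :=
  clos_refl_trans graph sieve_step policy_graph E /\ sieve_final E.

End QNP.

(* Main.v *)
From Stdlib Require Import Relations Classical ClassicalEpsilon.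
Require Import Defs.
From mathcomp Require Import all_boot.
Set Implicit Arguments. Unset Strict Implicit. Unset Printing Implicit Defensive.
Local Arguments rt_step {A R x y} _.
Local Arguments rt_trans {A R x y z} _ _.
Local Arguments rt_refl {A R x}.

Section Proof.
Variables (F V A : finType) (Q : qnp F V A) (pi : policy F V A).
Local Notation st := (state F V).
Local Notation crt := (clos_refl_trans st).
Local Notation pst := (pstep Q pi).
Local Notation pg := (policy_graph Q pi).
Local Notation reach := (reachable Q pi).

Fixpoint chain (R : st -> st -> Prop) (x : st) (l : seq st) : Prop :=
  match l with [::] => True | y :: l' => R x y /\ chain R y l' end.

Lemma chain_cat R x l1 l2 :
  chain R x (l1 ++ l2) <-> chain R x l1 /\ chain R (last x l1) l2.
Proof. elim: l1 x => [|y l IH] x /=; first tauto. rewrite IH; tauto. Qed.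

Lemma chain_mono (R R' : st -> st -> Prop) x l :
  (forall a b, R a b -> R' a b) -> chain R x l -> chain R' x l.
Proof. move=> H; elim: l x => [|y l IH] x //= [H1 H2]; split; auto. Qed.

Lemma crt_chain R x y : crt R x y -> exists l, chain R x l /\ last x l = y.
Proof.
  move/clos_rt_rt1n_iff; elim => [z|a b c Hab _ [l [H1 H2]]]; first by exists [::].
  by exists (b :: l).
Qed.

Lemma chain_last R x l : chain R x l -> crt R x (last x l).
Proof.
  elim: l x => [|y l IH] x /=; first by move=> _; apply rt_refl.
  move=> [H1 H2]; apply: rt_trans (IH _ H2); exact: rt_step.
Qed.

Lemma chain_crt R x l : chain R x l -> forall z, z \in l ->
  crt R x z /\ crt R z (last x l).
Proof.
  elim: l x => [|y l IH] x //= [Hxy Hc] z; rewrite in_cons => /orP [/eqP->|Hz].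
  - split; [exact: rt_step | exact: chain_last].
  - have [H1 H2] := IH _ Hc _ Hz; split => //; apply: rt_trans H1; exact: rt_step.
Qed.

Lemma chain_nth R x l d i : chain R x l -> i < size l ->
  R (nth d (x::l) i) (nth d (x::l) i.+1).
Proof.
  elim: l x i => [|y l IH] x [|i] //= [H Hc] Hi; first exact H.
  exact: IH.
Qed.

Definition cyc_tr (x0 w0 : st) (p c : seq st) (n : nat) : st :=
  if n <= size p then nth x0 (x0::p) n else nth w0 (w0::c) ((n - size p) %% size c).

Lemma cyc_tr_hi x0 w0 p c n : last x0 p = w0 -> size p <= n ->
  cyc_tr x0 w0 p c n = nth w0 (w0::c) ((n - size p) %% size c).
Proof.
  move=> Hl Hn; rewrite /cyc_tr; case: ifP => // Hn'.
  have -> : n = size p by apply/eqP; rewrite eqn_leq Hn' Hn.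
  rewrite subnn mod0n /=.
  by have := nth_last x0 (x0 :: p); rewrite /= Hl.
Qed.

Lemma cyc_traj R x0 w0 p c :
  chain R x0 p -> last x0 p = w0 -> chain R w0 c -> last w0 c = w0 -> 0 < size c ->
  let tr := cyc_tr x0 w0 p c in
  tr 0 = x0 /\ (forall n, R (tr n) (tr n.+1)) /\
  (forall s, occurs_inf tr s <-> s \in w0 :: c).
Proof.
  move=> Hp Hl Hc Hlc Hsz tr; split; first by rewrite /tr /cyc_tr leq0n.
  have Hnthm : nth w0 (w0::c) (size c) = w0.
    by have := nth_last w0 (w0 :: c); rewrite /= Hlc.
  split.
  - move=> n; case: (ltnP n (size p)) => Hn.
    + rewrite /tr /cyc_tr ltnW // Hn; exact: chain_nth.
    + rewrite /tr !cyc_tr_hi // ?(leqW Hn) // subSn //.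
      set k := n - size p.
      have Hj : k %% size c < size c by rewrite ltn_pmod.
      have -> : k.+1 %% size c = (k %% size c).+1 %% size c.
        by rewrite -addn1 -modnDml addn1.
      case: (ltnP (k %% size c).+1 (size c)) => Hj2.
      * rewrite (modn_small Hj2); exact: (@chain_nth R w0 c w0 _ Hc Hj).
      * have Heq : (k %% size c).+1 = size c by apply/eqP; rewrite eqn_leq Hj Hj2.
        rewrite Heq modnn /=.
        have := chain_nth w0 Hc Hj; rewrite Heq Hnthm //.
  - move=> s; split.
    + move/(_ (size p)) => [m [Hm <-]]; rewrite /tr cyc_tr_hi //.
      apply: mem_nth; rewrite /= ltnS; apply: ltnW; exact: ltn_pmod.
    + move=> Hs.
      have [j [Hj Hsj]] : exists j, j < size c /\ nth w0 (w0::c) j = s.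
        have Hi : index s (w0 :: c) < (size c).+1 by rewrite -[(size c).+1]/(size (w0::c)) index_mem.
        case: (ltnP (index s (w0::c)) (size c)) => Hi2.
        * exists (index s (w0::c)); split => //; exact: nth_index.
        * exists 0; split => //.
          have Heq : index s (w0::c) = size c by apply/eqP; rewrite eqn_leq Hi2 -ltnS Hi.
          have := nth_index w0 Hs; rewrite Heq Hnthm /= => ->.
          by [].
      move=> n; exists (size p + (n * size c + j)); split.
      * apply: leq_trans (leq_addl _ _); apply: leq_trans (leq_addr _ _).
        by rewrite leq_pmulr.
      * rewrite /tr cyc_tr_hi ?leq_addr // addKn modnMDl modn_small //.
Qed.

Lemma cyc_traj' R x0 w0 p c :
  chain R x0 p -> last x0 p = w0 -> chain R w0 c -> last w0 c = w0 -> 0 < size c ->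
  exists tr : nat -> st, tr 0 = x0 /\ (forall n, R (tr n) (tr n.+1)) /\
  (forall s, occurs_inf tr s <-> s \in w0 :: c).
Proof. move=> H1 H2 H3 H4 H5; exists (cyc_tr x0 w0 p c); exact: cyc_traj. Qed.

Lemma crt_mono (R R' : st -> st -> Prop) a b :
  (forall x y, R x y -> R' x y) -> crt R a b -> crt R' a b.
Proof.
  move=> H; elim => [x y /H Hxy|x|x y z _ H1 _ H2]; [exact: rt_step|exact: rt_refl|exact: rt_trans H1 H2].
Qed.

Lemma first_edge R u v w : crt R u v -> R v w -> exists z, R u z /\ crt R z w.
Proof.
  move/clos_rt_rt1n_iff; elim => [x|x y z' Hxy Hyz _] Hw.
  - by exists w; split; [|apply rt_refl].
  - exists y; split => //; apply: rt_trans (rt_step Hw); exact/clos_rt_rt1n_iff.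
Qed.

Lemma reach_step u v : reach u -> pst u v -> reach v.
Proof. move=> Hu Huv; apply: rt_trans Hu (rt_step Huv). Qed.

Lemma sub_crt E1 E2 : clos_refl_trans (graph F V) (sieve_step Q pi) E1 E2 ->
  forall x y, E2 x y -> E1 x y.
Proof.
  elim => [E E' [_ [C [X [_ ->]]]] x y [H _]|//|E1' E2' E3' _ IH1 _ IH2 x y H]; auto.
Qed.

Lemma reach_E (E : graph F V) u z : (forall x y, E x y -> pg x y) ->
  reach u -> crt E u z -> reach z.
Proof.
  move=> Hs Hu /(crt_mono (R' := pst)) H.
  apply: rt_trans Hu (H _); by move=> x y /Hs [].
Qed.

Lemma traj_reach tr : inf_traj Q pi tr -> forall n, reach (tr n).
Proof.
  move=> [H0 Hs]; elim => [|n IH]; first by rewrite H0; apply rt_refl.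
  exact: reach_step IH (Hs n).
Qed.

Lemma unif (P : st * st -> nat -> Prop) :
  (forall e n m, n <= m -> P e n -> P e m) -> (forall e, exists n, P e n) ->
  exists n, forall e, P e n.
Proof.
  move=> Hm H.
  have: forall l : seq (st * st), exists n, forall e, e \in l -> P e n.
    elim => [|e l [n IH]]; first by exists 0.
    have [k Hk] := H e; exists (maxn n k) => e'; rewrite in_cons => /orP [/eqP->|He].
    - apply: Hm Hk; exact: leq_maxr.
    - apply: Hm (IH _ He); exact: leq_maxl.
  move/(_ (enum (predT : {pred (st * st)%type}))) => [n Hn]; exists n => e; apply: Hn; by rewrite mem_enum.
Qed.

Lemma dir1 : P_terminating Q pi -> forall E, sieve_result Q pi E -> acyclic E.
Proof.
  move=> HP E [Hrt Hfin].
  have Esub : forall x y, E x y -> pg x y by move=> x y H; exact: (sub_crt Hrt H).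
  case: Hfin => // Hno x y Hxy Hyx; apply: Hno.
  pose C := fun z => reach z /\ crt E x z /\ crt E z x.
  have Hrx : reach x by have [] := Esub _ _ Hxy.
  have Hcov : forall l : seq st, exists c, chain E x c /\ last x c = x /\ 0 < size c /\
      forall z, z \in l -> C z -> z \in x :: c.
    elim => [|a l [c [Hc [Hl [Hs Hm]]]]].
    - have [q [Hq Hlq]] := crt_chain Hyx; by exists (y :: q).
    - case: (classic (C a)) => Ha; last first.
        exists c; split; [done|split; [done|split; [done|]]] => z; rewrite in_cons => /orP [/eqP-> //|]; exact: Hm.
      have [_ [Hxa Hax]] := Ha.
      have [q1 [Hq1 Hl1]] := crt_chain Hxa; have [q2 [Hq2 Hl2]] := crt_chain Hax.
      exists (c ++ q1 ++ q2); do !split.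
      + apply/chain_cat; split => //; rewrite Hl; apply/chain_cat; split => //; by rewrite Hl1.
      + by rewrite !last_cat Hl Hl1 Hl2.
      + by rewrite size_cat addn_gt0 Hs.
      + move=> z; rewrite in_cons => /orP [/eqP-> _|Hz Cz].
        * have : a \in x :: q1 by rewrite -Hl1 mem_last.
          rewrite !in_cons !mem_cat; by case/orP => ->; rewrite ?orbT.
        * have := Hm z Hz Cz; rewrite !in_cons !mem_cat; by case/orP => ->; rewrite ?orbT.
  have [c [Hc [Hlc [Hsc Hcov']]]] := Hcov (enum (predT : {pred st})).
  have [p [Hp Hlp]] := crt_chain Hrx.
  have HcP : chain pst x c by apply: chain_mono Hc => a b /Esub [].
  have [tr [Htr0 [Htr1 Htr2]]] := cyc_traj' Hp Hlp HcP Hlc Hsc.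
  have Hinf : inf_traj Q pi tr by split.
  have Hocc : forall s, occurs_inf tr s <-> C s.
    move=> s; rewrite Htr2; split.
    - rewrite in_cons => /orP [/eqP-> | Hs].
        by split; [done| split; apply rt_refl].
      have [H1 H2] := chain_crt Hc Hs; rewrite Hlc in H2.
      split; [exact: reach_E Esub Hrx H1 | done].
    - move=> Cs; apply: Hcov' => //; by rewrite mem_enum.
  have [X [[s [Hs Hds]] Hni]] := HP tr Hinf.
  exists C, X; split; [|split; [|split]].
  - by exists x; split.
  - exists x, y; split; first by split; [done|split; apply rt_refl].
    split => //; split; last by split; [apply rt_step|].
    by have [_ Hp'] := Esub _ _ Hxy; exact: reach_step Hrx Hp'.
  - by exists s; rewrite -Hocc.
  - by move=> s' /Hocc; apply: Hni.
Qed.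

Lemma dir2 E : sieve_result Q pi E -> acyclic E -> P_terminating Q pi.
Proof.
  move=> [Hrt _] Hac tr Htr; apply: NNPP => NT.
  pose Inf := fun s s' => forall n, exists m, n <= m /\ tr m = s /\ tr m.+1 = s'.
  have [N HN] : exists N, forall m, N <= m -> Inf (tr m) (tr m.+1).
    have := @unif (fun e n => Inf e.1 e.2 \/ forall m, n <= m -> ~ (tr m = e.1 /\ tr m.+1 = e.2)).
    case.
    - move=> e n m Hnm [H|H]; [by left| right => k Hk; apply H; exact: leq_trans Hk].
    - move=> e; case: (classic (Inf e.1 e.2)) => H; first by exists 0; left.
      have [n Hn] := not_all_ex_not _ _ H.
      exists n; right => m Hm Heq; apply Hn; exists m; tauto.
    move=> N HN; exists N => m Hm; case: (HN (tr m, tr m.+1)) => //= H; by case: (H m Hm).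
  have Hocc1 : forall s s', Inf s s' -> occurs_inf tr s.
    by move=> s s' H n; have [m [? [? _]]] := H n; exists m.
  have Hocc2 : forall s s', Inf s s' -> occurs_inf tr s'.
    move=> s s' H n; have [m [? [_ ?]]] := H n; exists m.+1; split => //; exact: leqW.
  have Hpath : forall m k, N <= m -> crt Inf (tr m) (tr (m + k)).
    move=> m; elim => [|k IH] Hm; first by rewrite addn0; apply rt_refl.
    rewrite addnS; apply: rt_trans (IH Hm) _; apply rt_step; apply HN.
    exact: leq_trans Hm (leq_addr _ _).
  have Hconn : forall s t, occurs_inf tr s -> occurs_inf tr t -> crt Inf s t.
    move=> s t Hs Ht; have [m1 [H1 <-]] := Hs N; have [m2 [H2 <-]] := Ht m1.
    rewrite -(subnKC H2); exact: Hpath.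
  have Hreach := traj_reach Htr.
  have Hinv : forall E1 E2, clos_refl_trans (graph F V) (sieve_step Q pi) E1 E2 ->
      (forall s s', Inf s s' -> E1 s s') -> forall s s', Inf s s' -> E2 s s'.
    move=> E1 E2; elim => {E1 E2} [E1 E2 Hst|E1|E1 E2 E3 _ IH1 _ IH2]; [|done|auto].
    move=> HI s s' Hi; case: Hst => _ [C [X [[Hscc [_ [_ Hni]]] ->]]].
    split; first exact: HI.
    move=> [Cs [Cs' Hd]]; apply: NT; exists X; split.
      by exists s; split => //; exact: Hocc1 Hi.
    move=> t Ht Hinc; apply: (Hni t) Hinc.
    have [r [Hr HC]] := Hscc; have [_ [Hrs Hsr]] := (HC s).1 Cs.
    have Hocs := Hocc1 _ _ Hi.
    apply/HC; split; first by have [m [_ <-]] := Ht 0.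
    split.
    - apply: rt_trans Hrs (crt_mono HI (Hconn _ _ Hocs Ht)).
    - apply: rt_trans (crt_mono HI (Hconn _ _ Ht Hocs)) Hsr.
  have HIE : forall s s', Inf s s' -> E s s'.
    apply: Hinv Hrt _ => s s' Hi; have [m [_ [<- <-]]] := Hi 0.
    split; [exact: Hreach | exact: Htr.2 m].
  have HNN := HN N (leqnn N).
  apply: (Hac (tr N) (tr N.+1)); first exact: HIE.
  apply: crt_mono HIE _; apply: Hconn; [exact: Hocc2 HNN | exact: Hocc1 HNN].
Qed.

Definition asb (P : Prop) : bool := if excluded_middle_informative P then true else false.
Lemma asbP P : asb P <-> P.
Proof. rewrite /asb; case: excluded_middle_informative => //. Qed.
Definition edges (E : graph F V) : {pred st * st} := fun e => asb (E e.1 e.2).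

Lemma step_exists E : clos_refl_trans (graph F V) (sieve_step Q pi) pg E ->
  ~ sieve_final Q pi E ->
  exists E', sieve_step Q pi E E' /\ #|edges E'| < #|edges E|.
Proof.
  move=> Hrt Hnf.
  have Esub : forall x y, E x y -> pg x y by move=> x y H; exact: (sub_crt Hrt H).
  have Hna : ~ acyclic E by move=> H; apply Hnf; left.
  have [C [X Hch]] : exists C X, sieve_choice Q pi E C X by apply: NNPP => H; apply Hnf; right.
  exists (sieve_remove Q pi E C X); split; first by split => //; exists C, X.
  apply: proper_card; apply/properP; split.
  - apply/subsetP => e; rewrite /edges !unfold_in /= => /asbP [H _]; exact/asbP.
  - have [[r [Hr HC]] [[a [b [Ca [Cb Hab]]]] [[s [Cs Hds]] Hni]]] := Hch.
    have [Hrs' [Hrs Hsr]] := (HC s).1 Cs.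
    have [_ [Hra Har]] := (HC a).1 Ca; have [_ [Hrb Hbr]] := (HC b).1 Cb.
    have [z [Hsz Hzb]] := first_edge (rt_trans Hsr Hra) Hab.
    have Cz : C z.
      apply/HC; split; first by have [_ Hp] := Esub _ _ Hsz; exact: reach_step Hrs' Hp.
      split; [exact: rt_trans Hrs (rt_step Hsz) | exact: rt_trans Hzb Hbr].
    exists (s, z); rewrite /edges !unfold_in /=.
    + exact/asbP.
    + apply/negP => /asbP [_ []]; tauto.
Qed.

Lemma exists_result : exists E, sieve_result Q pi E.
Proof.
  suff H : forall n E, #|edges E| <= n -> clos_refl_trans (graph F V) (sieve_step Q pi) pg E ->
      exists E', sieve_result Q pi E'.
    exact: (H _ pg (leqnn _) rt_refl).
  elim => [|n IH] E Hn Hrt; case: (classic (sieve_final Q pi E)) => Hf;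
    try by exists E.
  - have [E' [_ Hlt]] := step_exists Hrt Hf.
    by have := leq_trans Hlt Hn; rewrite ltn0.
  - have [E' [Hs Hlt]] := step_exists Hrt Hf.
    apply: (IH E'); first by rewrite -ltnS; exact: leq_trans Hlt Hn.
    exact: rt_trans Hrt (rt_step Hs).
Qed.

End Proof.

Theorem theorem6 (F V A : finType) (Q : qnp F V A) (pi : policy F V A) :
  wf_qnp Q ->
  (P_terminating Q pi <-> (forall E, sieve_result Q pi E -> acyclic E)) /\
  (P_terminating Q pi <-> (exists E, sieve_result Q pi E /\ acyclic E)).
Proof.
  move=> _; have [E0 HE0] := exists_result Q pi.
  split; split.
  - exact: dir1.
  - move=> H; exact: dir2 HE0 (H _ HE0).
  - move=> HP; exists E0; split => //; exact: dir1 HP E0 HE0.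
  - move=> [E [H1 H2]]; exact: dir2 H1 H2.
Qed.
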